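(* Let $\widetilde{\Sigma}_1,\ldots,\widetilde{\Sigma}_n$ be pairwise disjoint visibly pushdown alphabets and $P_k\subseteq\widetilde{\Sigma}_k^*$ well-matched visibly pushdown languages, each equipped with a semantics $\mathcal{F}_k$ as described in the context, and let $\mathcal{M}$ (the $n$-stack semantics) and $\mathcal{S}$ (the single-stack semantics) be defined from them as in the context. Then for every word $\rho\in P_1\bowtie\cdots\bowtie P_n$ and all assertions $A,B$ over the valuations in $V$, the Hoare triple $\{A\}\rho\{B\}$ is valid with respect to $\mathcal{M}$ if and only if it is valid with respect to $\mathcal{S}$.
   Context: A visibly pushdown (VP) alphabet is a finite alphabet partitioned into calls, returns and internals; $\Sigma^{\mathsf{call}}_k,\Sigma^{\mathsf{ret}}_k,\Sigma^{\mathsf{int}}_k$ are those of $\widetilde{\Sigma}_k$, and $\widetilde{\Sigma}=\biguplus_k\widetilde{\Sigma}_k$. Calls and returns are matched like parentheses (internals ignored); well-matched = all matched. Shuffle $P_1\parallel\cdots\parallel P_n=\{w\in\widetilde{\Sigma}^*:\Pi_{\widetilde{\Sigma}_k}(w)\in P_k\ \forall k\}$; a word is well-nested if every matched call–return pair consists of letters from the same $\widetilde{\Sigma}_k$; $P_1\bowtie\cdots\bowtie P_n$ is the set of well-nested words of the shuffle. Program $k$ has its own variables (disjoint across programs); $V_k$ is its set of valuations, and $V$ is the set of valuations of all variables, identified with tuples $\nu=(\nu|_1,\ldots,\nu|_n)$, $\nu|_j\in V_j$. A stack is a nonempty finite sequence of frames; $S.\nu$ denotes a stack with top frame $\nu$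 and rest $S$. Semantics $\mathcal{F}_k$: for $c\in\Sigma^{\mathsf{call}}_k$, $\mathcal{F}_k(c):V_k\to 2^{V_k}$; for $r\in\Sigma^{\mathsf{ret}}_k$, $\mathcal{F}_k(r):V_k\times V_k\to 2^{V_k}$; for $a\in\Sigma^{\mathsf{int}}_k$, $\mathcal{F}_k(a):V_k\to 2^{V_k}$. $n$-stack semantics: for $x\in\widetilde{\Sigma}_k$, $\mathcal{M}(x)$ relates tuples $(S_1,\ldots,S_n)$ of stacks ($S_j$ over $V_j$) leaving components $j\ne k$ unchanged and changing the $k$-th as: call $x$: $S.\nu\mapsto S.\nu.\nu'$ with $\nu'\in\mathcal{F}_k(x)(\nu)$; return $x$: $S.\nu_<.\nu\mapsto S.\nu'$ with $\nu'\in\mathcal{F}_k(x)(\nu,\nu_<)$; internal $x$: $S.\nu\mapsto S.\nu'$ with $\nu'\in\mathcal{F}_k(x)(\nu)$. Single-stack semantics on stacks over $V$: for $x\in\widetilde{\Sigma}_k$, call: $S.\nu\mapsto S.\nu.\nu'$ with $\nu'|_k\in\mathcal{F}_k(x)(\nu|_k)$, $\nu'|_j=\nu|_j$ ($j\ne k$); return: $S.\nu_<.\nu\mapsto S.\nu'$ with $\nu'|_k\in\mathcal{F}_k(x)(\nu|_k,\nu_<|_k)$, $\nu'|_j=\nu|_j$ ($j\ne k$); internal: $S.\nu\mapsto S.\nu'$ with $\nu'|_k\in\mathcal{F}_k(x)(\nu|_k)$, $\nu'|_j=\nu|_j$ ($j\ne k$). Both are extended to words by relational composition. $\{A\}\rho\{B\}$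 is valid w.r.t. $\mathcal{M}$ if for all $((S_1.\nu_1,\ldots,S_n.\nu_n),(S_1'.\nu_1',\ldots,S_n'.\nu_n'))\in\mathcal{M}(\rho)$, $(\nu_1,\ldots,\nu_n)\models A$ implies $(\nu'_1,\ldots,\nu'_n)\models B$; valid w.r.t. $\mathcal{S}$ if for all $(S.\nu,S'.\nu')\in\mathcal{S}(\rho)$, $\nu\models A$ implies $\nu'\models B$. *)

(* Defs.v *)
From mathcomp Require Import all_boot.
Set Implicit Arguments. Unset Strict Implicit. Unset Printing Implicit Defensive.

(* The disjoint union of the VP alphabets Sigma_1,...,Sigma_n is a finite type X;
   [comp x : 'I_n] says to which Sigma_k the letter x belongs, and
   [kind x] says whether x is a call, a return or an internal letter. *)
Inductive letter_kind := KCall | KRet | KInt.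

Fixpoint rel_word (X T : Type) (R : X -> T -> T -> Prop) (w : seq X) : T -> T -> Prop :=
  match w with
  | [::] => fun a b => a = b
  | x :: w' => fun a c => exists b, R x a b /\ rel_word R w' b c
  end.

Section VP.
Variables (X : finType) (kind : X -> letter_kind).

Inductive well_matched : seq X -> Prop :=
| wm_nil : well_matched [::]
| wm_int a w : kind a = KInt -> well_matched w -> well_matched (a :: w)
| wm_callret c w1 r w2 : kind c = KCall -> kind r = KRet ->
    well_matched w1 -> well_matched w2 -> well_matched (c :: w1 ++ r :: w2).

Definition matched (x0 : X) (w : seq X) (i j : nat) : Prop :=
  [/\ i < j, j < size w, kind (nth x0 w i) = KCall, kind (nth x0 w j) = KRet
    & well_matched (take (j - i.+1) (drop i.+1 w))].

End VP.

(* Visibly pushdown automata over X (nondeterministic, acceptance by final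
   state; returns on the empty stack read the bottom symbol, encoded as None). *)
Record VPA (X : finType) := {
  vQ : finType;
  vG : finType;
  v_init : pred vQ;
  v_final : pred vQ;
  v_call : vQ -> X -> vQ -> vG -> bool;
  v_ret  : vQ -> X -> option vG -> vQ -> bool;
  v_int  : vQ -> X -> vQ -> bool
}.

Section VP2.
Variables (X : finType) (kind : X -> letter_kind).

Definition vpa_step (A : VPA X) (x : X) (c c' : vQ A * seq (vG A)) : Prop :=
  match kind x with
  | KCall => exists g, @v_call X A c.1 x c'.1 g /\ c'.2 = g :: c.2
  | KRet => (exists g, c.2 = g :: c'.2 /\ @v_ret X A c.1 x (Some g) c'.1)
            \/ (c.2 = [::] /\ c'.2 = [::] /\ @v_ret X A c.1 x None c'.1)
  | KInt => @v_int X A c.1 x c'.1 /\ c'.2 = c.2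
  end.

Definition vpa_accepts (A : VPA X) (w : seq X) : Prop :=
  exists q0 qf st, @v_init X A q0 /\ @v_final X A qf /\
    rel_word (@vpa_step A) w (q0, [::]) (qf, st).

Definition is_VPL (L : seq X -> Prop) : Prop :=
  exists A : VPA X, forall w, L w <-> vpa_accepts A w.
End VP2.

Section Shuffle.
Variables (n : nat) (X : finType) (kind : X -> letter_kind) (comp : X -> 'I_n).

Definition proj (k : 'I_n) (w : seq X) : seq X := [seq x <- w | comp x == k].

Definition well_nested (w : seq X) : Prop :=
  forall x0 i j, matched kind x0 w i j -> comp (nth x0 w i) = comp (nth x0 w j).

Definition in_bowtie (P : 'I_n -> seq X -> Prop) (w : seq X) : Prop :=
  (forall k, P k (proj k w)) /\ well_nested w.
End Shuffle.

(* A stack is a nonempty sequence of frames: (S, nu) stands for S.nu, the top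
   frame being nu; S is listed from the frame just below the top downwards. *)
Definition stack (T : Type) := (seq T * T)%type.

Section Sem.
Variables (n : nat) (X : finType) (kind : X -> letter_kind) (comp : X -> 'I_n).
Variable V : 'I_n -> Type.
Definition Vall := forall k, V k.

(* Fc x nu nu'      : nu' \in F_k(x)(nu)       (x call or internal of Sigma_k)
   Fr x nu nul nu'  : nu' \in F_k(x)(nu, nul)  (x return of Sigma_k)        *)
Variable Fc : forall x : X, V (comp x) -> V (comp x) -> Prop.
Variable Fr : forall x : X, V (comp x) -> V (comp x) -> V (comp x) -> Prop.

Definition local_step (x : X) (s s' : stack (V (comp x))) : Prop :=
  match kind x with
  | KCall => exists S nu nu', [/\ s = (S, nu), Fc nu nu' & s' = (nu :: S, nu')]
  | KRet => exists S nul nu nu',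
              [/\ s = (nul :: S, nu), Fr nu nul nu' & s' = (S, nu')]
  | KInt => exists S nu nu', [/\ s = (S, nu), Fc nu nu' & s' = (S, nu')]
  end.

Definition Mstep (x : X) (C C' : forall k, stack (V k)) : Prop :=
  local_step (C (comp x)) (C' (comp x)) /\
  (forall j, j != comp x -> C' j = C j).

Definition frame_upd (x : X) (nu nu' : Vall) : Prop :=
  forall j, j != comp x -> nu' j = nu j.

Definition Sstep (x : X) (s s' : stack Vall) : Prop :=
  match kind x with
  | KCall => exists S nu nu', [/\ s = (S, nu), s' = (nu :: S, nu'),
               Fc (nu (comp x)) (nu' (comp x)) & frame_upd x nu nu']
  | KRet => exists S nul nu nu', [/\ s = (nul :: S, nu), s' = (S, nu'),
               Fr (nu (comp x)) (nul (comp x)) (nu' (comp x)) & frame_upd x nu nu']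
  | KInt => exists S nu nu', [/\ s = (S, nu), s' = (S, nu'),
               Fc (nu (comp x)) (nu' (comp x)) & frame_upd x nu nu']
  end.

Definition valid_M (A B : Vall -> Prop) (rho : seq X) : Prop :=
  forall C C' : forall k, stack (V k), rel_word Mstep rho C C' ->
    A (fun k => (C k).2) -> B (fun k => (C' k).2).

Definition valid_S (A B : Vall -> Prop) (rho : seq X) : Prop :=
  forall s s' : stack Vall, rel_word Sstep rho s s' -> A s.2 -> B s'.2.
End Sem.

(* Main.v *)
Require Import Defs.
From mathcomp Require Import all_boot zify.
From Stdlib Require Import FunctionalExtensionality.
Set Implicit Arguments. Unset Strict Implicit. Unset Printing Implicit Defensive.

Section A.
Variables (n : nat) (X : finType) (kind : X -> letter_kind) (comp : X -> 'I_n).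

Fixpoint run (w : seq X) (h : nat) : option nat :=
  match w with
  | [::] => Some h
  | x :: w' => match kind x with
     | KCall => run w' h.+1
     | KRet => if h is h'.+1 then run w' h' else None
     | KInt => run w' h end
  end.

Lemma run_cat u v h : run (u ++ v) h = obind (run v) (run u h).
Proof.
elim: u h => [|x u IH] h //=.
by case: (kind x); [| case: h => [|h] |]; rewrite ?IH.
Qed.

Lemma run_wm w : well_matched kind w -> forall h, run w h = Some h.
Proof.
elim=> {w} [|a w ka _ IH|c w1 r w2 kc kr _ IH1 _ IH2] h //=.
  by rewrite ka IH.
by rewrite kc run_cat IH1 /= kr IH2.
Qed.

Lemma run_shift w h h' k : run w h = Some h' -> run w (h + k) = Some (h' + k).
Proof.
elim: w h => [|x w IH] h /=; first by case=> ->.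
case: (kind x); [exact: IH | case: h => [|h] //; exact: IH | exact: IH].
Qed.

Lemma run_split m w h : size w <= m -> run w h.+1 = Some 0 ->
  exists w1 r w2, [/\ w = w1 ++ r :: w2, kind r = KRet, run w1 0 = Some 0
                   & run w2 h = Some 0].
Proof.
elim: m w h => [|m IHm] [|x w] h //=.
move=> Hs; case kx: (kind x) => H.
- have [w1 [r [w2 [e kr h1 h2]]]] := IHm w h.+1 Hs H.
  have Hs2 : size w2 <= m by move: Hs; rewrite e size_cat /=; lia.
  have [w3 [r' [w4 [e' kr' h3 h4]]]] := IHm w2 h Hs2 h2.
  exists (x :: w1 ++ r :: w3), r', w4; split => //.
    by rewrite e e' /= -catA.
  rewrite /= kx run_cat (run_shift 1 h1) /= kr //.
- by exists [::], x, w.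
- have [w1 [r [w2 [e kr h1 h2]]]] := IHm w h Hs H.
  by exists (x :: w1), r, w2; rewrite e /= kx.
Qed.

Lemma run_wm_inv m w : size w <= m -> run w 0 = Some 0 -> well_matched kind w.
Proof.
elim: m w => [|m IHm] [|x w] //=; try by constructor.
move=> Hs; case kx: (kind x) => H.
- have [w1 [r [w2 [e kr h1 h2]]]] := run_split Hs H.
  rewrite e; apply: wm_callret => //; apply: IHm => //;
  move: Hs; rewrite e size_cat /=; lia.
- by [].
- by apply: wm_int => //; apply: IHm.
Qed.

Lemma sum_bump (a : 'I_n) (f : 'I_n -> nat) :
  \sum_k (if a == k then (f k).+1 else f k) = (\sum_k f k).+1.
Proof.
rewrite [LHS](bigD1 a) // [in RHS](bigD1 a) //= eqxx addSn; congr (_ + _).+1.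
by apply: eq_bigr => k; rewrite eq_sym => /negbTE ->.
Qed.

Lemma proj_cons k x w : proj comp k (x :: w) =
  if comp x == k then x :: proj comp k w else proj comp k w.
Proof. by rewrite /proj /=; case: (comp x == k). Qed.

Lemma run_proj w (h h' : 'I_n -> nat) :
  (forall k, run (proj comp k w) (h k) = Some (h' k)) ->
  run w (\sum_k h k) = Some (\sum_k h' k).
Proof.
elim: w h => [|x w IH] h H.
  by congr Some; apply: eq_bigr => k _; case: (H k).
rewrite /=; case kx: (kind x).
- rewrite -(sum_bump (comp x)); apply: IH => k; have := H k.
  by rewrite proj_cons; case: (comp x == k) => //=; rewrite kx.
- pose h1 k := if comp x == k then (h k).-1 else h k.
  have hp : 0 < h (comp x).
    by have := H (comp x); rewrite proj_cons eqxx /= kx; case: (h (comp x)).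
  have -> : \sum_k h k = (\sum_k h1 k).+1.
    rewrite -(sum_bump (comp x)); apply: eq_bigr => k _; rewrite /h1.
    by case: eqP => // <-; rewrite prednK.
  apply: IH => k; have := H k; rewrite proj_cons /h1.
  by case: eqP => //= <-; rewrite kx; case: (h (comp x)) hp.
- apply: IH => k; have := H k.
  by rewrite proj_cons; case: (comp x == k) => //=; rewrite kx.
Qed.

Lemma wm_of_proj w : (forall k, well_matched kind (proj comp k w)) -> well_matched kind w.
Proof.
move=> H; apply: (@run_wm_inv (size w)) => //.
have := @run_proj w (fun _ => 0) (fun _ => 0) (fun k => run_wm (H k) 0).
by rewrite big1_eq.
Qed.

End A.
Section C.
Variables (n : nat) (X : finType) (kind : X -> letter_kind) (comp : X -> 'I_n).

Lemma nth_shift (x0 : X) u v i : nth x0 (u ++ v) (size u + i) = nth x0 v i.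
Proof. by rewrite nth_cat ltnNge leq_addr /= addKn. Qed.

Lemma matched_shift u v (x0 : X) i j : matched kind x0 v i j ->
  matched kind x0 (u ++ v) (size u + i) (size u + j).
Proof.
case=> hij hj ki kj hw; split; rewrite ?nth_shift //.
- by rewrite ltn_add2l.
- by rewrite size_cat ltn_add2l.
have -> : size u + j - (size u + i).+1 = j - i.+1 by lia.
by rewrite -addnS drop_cat ltnNge leq_addr /= addKn.
Qed.

Lemma matched_pre u v (x0 : X) i j : matched kind x0 u i j ->
  matched kind x0 (u ++ v) i j.
Proof.
case=> hij hj ki kj hw; split => //.
- by rewrite size_cat; lia.
- by rewrite nth_cat (ltn_trans hij hj).
- by rewrite nth_cat hj.
have hi : i.+1 < size u by lia.
rewrite drop_cat hi take_cat size_drop.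
have -> : (j - i.+1 < size u - i.+1) = true by apply/idP; lia.
by [].
Qed.

Lemma wn_cons a w : well_nested kind comp (a :: w) -> well_nested kind comp w.
Proof. by move=> H x0 i j m; have := H x0 i.+1 j.+1 (@matched_shift [:: a] _ _ _ _ m). Qed.

Lemma wn_call c w1 r w2 : well_nested kind comp (c :: w1 ++ r :: w2) ->
  well_matched kind w1 -> kind c = KCall -> kind r = KRet ->
  [/\ comp c = comp r, well_nested kind comp w1 & well_nested kind comp w2].
Proof.
move=> H hw kc kr; split.
- have := H c 0 (size w1).+1; rewrite /= nth_cat ltnn subnn /=; apply.
  split => //=.
  + by rewrite size_cat /=; lia.
  + by rewrite nth_cat ltnn subnn.
  + by rewrite subn1 /= drop0 take_size_cat.
- move=> x0 i j m.
  have [hij hj _ _ _] := m.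
  have := H x0 i.+1 j.+1 (@matched_shift [:: c] _ _ _ _ (matched_pre (r :: w2) m)).
  by rewrite /= !nth_cat hj (ltn_trans hij hj).
- move=> x0 i j m.
  have e : c :: w1 ++ r :: w2 = (c :: w1 ++ [:: r]) ++ w2 by rewrite /= -catA.
  rewrite e in H.
  by have := H x0 _ _ (matched_shift (c :: w1 ++ [:: r]) m); rewrite !nth_shift.
Qed.

End C.
Lemma rel_word_cat (X T : Type) (R : X -> T -> T -> Prop) u v a c :
  rel_word R (u ++ v) a c <-> exists b, rel_word R u a b /\ rel_word R v b c.
Proof.
elim: u a => [|x u IH] a /=.
  by split; [exists a | case=> b [-> ]].
split.
  by case=> b [hb /IH [b' [h1 h2]]]; exists b'; split => //; exists b.
by case=> b' [[b [hb h1]] h2]; exists b; split => //; apply/IH; exists b'.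
Qed.

Section D.
Variables (n : nat) (X : finType) (kind : X -> letter_kind) (comp : X -> 'I_n).
Variable V : 'I_n -> Type.
Variable Fc : forall x : X, V (comp x) -> V (comp x) -> Prop.
Variable Fr : forall x : X, V (comp x) -> V (comp x) -> V (comp x) -> Prop.

Lemma simSM w : well_matched kind w -> well_nested kind comp w ->
  forall S nu s', rel_word (Sstep kind Fc Fr) w (S, nu) s' ->
  s'.1 = S /\ forall C : forall k, stack (V k), (forall k, (C k).2 = nu k) ->
    rel_word (Mstep kind Fc Fr) w C (fun k => ((C k).1, s'.2 k)).
Proof.
elim=> {w} [|a w ka _ IH|c w1 r w2 kc kr hw1 IH1 _ IH2] hwn S nu s' /=.
- move=> <-; split => // C HC.
  apply: functional_extensionality_dep => k /=.
  by move: (HC k); case: (C k) => a b /= ->.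
- case=> b [hs hr].
  move: hs; rewrite /Sstep ka => -[S0 [nu0 [nu1 [[<- <-] eb hF hU]]]]; subst b.
  have [e1 HM] := IH (wn_cons hwn) _ _ _ hr.
  split => // C HC.
  exists (fun k => ((C k).1, nu1 k)); split; last by apply: HM.
  split.
    rewrite /local_step ka.
    exists (C (comp a)).1, (C (comp a)).2, (nu1 (comp a)); split => //.
      by rewrite -surjective_pairing.
    by rewrite HC.
  by move=> j hj; rewrite /= hU // -HC -surjective_pairing.
- have [ecr wn1 wn2] := wn_call hwn hw1 kc kr.
  case=> b1 [hs1 /rel_word_cat [[S2 nu2] [hr1 [b3 [hs3 hr2]]]]].
  move: hs1; rewrite /Sstep kc => -[S0 [nu0 [nu1 [[<- <-] eb hF hU]]]]; subst b1.
  have [/= eS2 HM1] := IH1 wn1 _ _ _ hr1; subst S2.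
  move: hs3; rewrite /Sstep kr => -[S3 [nul [nu2' [nu3 [[<- <- <-] eb hFr hU3]]]]]; subst b3.
  have [/= e3 HM2] := IH2 wn2 _ _ _ hr2.
  split => // C HC.
  pose C1 := fun j => (if comp c == j then (C j).2 :: (C j).1 else (C j).1, nu1 j).
  pose C2 := fun k => ((C1 k).1, nu2 k).
  pose C3 := fun j => ((C j).1, nu3 j).
  exists C1; split.
    split.
      rewrite /local_step kc.
      exists (C (comp c)).1, (C (comp c)).2, (nu1 (comp c)); split => //.
        by rewrite -surjective_pairing.
        by rewrite HC.
      by rewrite /C1 eqxx.
    move=> j hj; rewrite /C1 eq_sym (negbTE hj) /=.
    by rewrite hU // -HC -surjective_pairing.
  apply/rel_word_cat; exists C2; split; first by apply: (HM1 C1).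
  exists C3; split; last by apply: HM2.
  split.
    rewrite /local_step kr.
    exists (C (comp r)).1, (C (comp r)).2, (nu2 (comp r)), (nu3 (comp r)); split => //.
      by rewrite /C2 /C1 ecr eqxx.
    by rewrite HC.
  move=> j hj; rewrite /C3 /C2 /C1 ecr eq_sym (negbTE hj) /=.
  by rewrite hU3.
Qed.

Lemma simMS w : well_matched kind w -> well_nested kind comp w ->
  forall C C' : forall k, stack (V k), rel_word (Mstep kind Fc Fr) w C C' ->
  (forall k, (C' k).1 = (C k).1) /\
  forall S, rel_word (Sstep kind Fc Fr) w (S, fun k => (C k).2) (S, fun k => (C' k).2).
Proof.
elim=> {w} [|a w ka _ IH|c w1 r w2 kc kr hw1 IH1 _ IH2] hwn C C' /=.
- by move=> ->.
- case=> C1 [[hl ho] hr].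
  move: hl; rewrite /local_step ka => -[S0 [nu0 [nu1 [e1 hF e2]]]].
  have [hs hrS] := IH (wn_cons hwn) _ _ hr.
  split.
    move=> k; rewrite hs; case: (eqVneq k (comp a)) => [->|ne].
      by rewrite e2 e1.
    by rewrite ho.
  move=> S; exists (S, fun k => (C1 k).2); split => //.
  rewrite /Sstep ka; exists S, (fun k => (C k).2), (fun k => (C1 k).2); split => //.
    by rewrite e1 e2.
  by move=> j hj; rewrite ho.
- have [ecr wn1 wn2] := wn_call hwn hw1 kc kr.
  case=> C1 [[hl1 ho1] /rel_word_cat [C2 [h1 [C3 [[hl3 ho3] h2]]]]].
  move: hl1; rewrite /local_step kc => -[S0 [nu0 [nu1 [e0 hF e1]]]].
  move: hl3; rewrite /local_step kr => -[S3 [nul [nu2 [nu3 [e2 hFr e3]]]]].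
  have [hs1 hr1] := IH1 wn1 _ _ h1.
  have [hs2 hr2] := IH2 wn2 _ _ h2.
  have F : (C1 (comp c)).1 = (C (comp c)).2 :: (C (comp c)).1 by rewrite e1 e0.
  rewrite ecr in F.
  have : nul :: S3 = (C (comp r)).2 :: (C (comp r)).1 by rewrite -F -hs1 e2.
  case=> enul eS3.
  split.
    move=> k; rewrite hs2; case: (eqVneq k (comp r)) => [->|ne].
      by rewrite e3.
    by rewrite ho3 // hs1 ho1 // ecr.
  move=> S.
  exists ((fun k => (C k).2) :: S, fun k => (C1 k).2); split.
    rewrite /Sstep kc; exists S, (fun k => (C k).2), (fun k => (C1 k).2); split => //.
      by rewrite e0 e1.
    by move=> j hj; rewrite ho1.
  apply/rel_word_cat; exists ((fun k => (C k).2) :: S, fun k => (C2 k).2); split.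
    by apply: hr1.
  exists (S, fun k => (C3 k).2); split => //.
  rewrite /Sstep kr; exists S, (fun k => (C k).2), (fun k => (C2 k).2), (fun k => (C3 k).2); split => //.
    by rewrite e2 e3 /= -enul.
  by move=> j hj; rewrite ho3.
Qed.
End D.

Theorem theorem7p1 (n : nat) (X : finType) (kind : X -> letter_kind)
    (comp : X -> 'I_n) (P : 'I_n -> seq X -> Prop)
    (hP_alph : forall k w, P k w -> all (fun x => comp x == k) w)
    (hP_vp : forall k, is_VPL kind (P k))
    (hP_wm : forall k w, P k w -> well_matched kind w)
    (V : 'I_n -> Type)
    (Fc : forall x : X, V (comp x) -> V (comp x) -> Prop)
    (Fr : forall x : X, V (comp x) -> V (comp x) -> V (comp x) -> Prop)
    (rho : seq X) (hrho : in_bowtie kind comp P rho)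
    (A B : Vall V -> Prop) :
  valid_M kind Fc Fr A B rho <-> valid_S kind Fc Fr A B rho.
Proof.
case: hrho => hp hwn.
have hwm : well_matched kind rho by apply: (@wm_of_proj _ _ kind comp) => k; apply: hP_wm (hp k).
split.
- move=> HM [S nu] s' hr HA.
  have [_ H] := @simSM _ _ kind comp V Fc Fr _ hwm hwn _ _ _ hr.
  exact: (HM _ _ (H (fun k => ([::], nu k)) (fun k => erefl)) HA).
- move=> HS C C' hr HA.
  have [_ H] := @simMS _ _ kind comp V Fc Fr _ hwm hwn _ _ hr.
  exact: (HS _ _ (H [::]) HA).
Qed.
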